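(* Probabilistic circuits and diagonal positive unital circuits over a given partition circuit are isomorphic, in the sense that: (i) for every diagonal positive unital circuit there is a probabilistic circuit over the same partition circuit with $P_k(\mathbf{x}_k)=\operatorname{diagvec}(O_k(\mathbf{x}_k))$ for every unit $k$ and every assignment $\mathbf{x}_k$; and (ii) conversely, for every probabilistic circuit there is a diagonal positive unital circuit over the same partition circuit with $\operatorname{diagvec}(O_k(\mathbf{x}_k))=P_k(\mathbf{x}_k)$ for every unit $k$ and every $\mathbf{x}_k$. Here $\operatorname{diagvec}(A)$ is the vector of diagonal entries of $A$.
   Context: A partition circuit over discrete variables $\mathbf{x}=\{x_0,\dots,x_{N-1}\}$ is a rooted binary tree whose leaves are in bijection with the variables (leaf $k$ carries $x_k$ with finite value set $\Omega(X_k)$), each internal unit $k$ having two children $k_l,k_r$; $\mathbf{x}_k$ denotes an assignment to the variables at leaves below $k$. Probabilistic circuit: to each leaf $k$ real vectors $P_{x_k}$ with nonnegative entries and $\sum_{x_k}P_{x_k}=(1,\dots,1)^T$, $P_k(\mathbf{x}_k)=P_{x_k}$; to each internal unit $k$ a real nonnegative row-stochastic matrix $W_k$ (rows sum to 1), $P_k(\mathbf{x}_k)=W_k(P_{k_l}(\mathbf{x}_{k_l})\otimes P_{k_r}(\mathbf{x}_{k_r}))$, $\otimes$ Kronecker product. Diagonal positive unital circuit: to each leaf $k$ diagonal complex matrices $\Delta_{x_k}$ with $\sum_{x_k}\Delta_{x_k}\Delta_{x_k}^*=\mathbb{1}$, $O_k(\mathbf{x}_k)=\Delta_{x_k}\Delta_{x_k}^*$;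 to each internal unit $k$ with input size $n$ (size of $O_{k_l}\otimes O_{k_r}$) and output size $m$, diagonal $n\times n$ matrices $D_{kj}$ ($j=1,\dots,m$) with $\operatorname{Tr}[D_{kj}D_{kj}^*]=1$, and $O_k(\mathbf{x}_k)=\sum_{j=1}^mJ_jD_{kj}(O_{k_l}(\mathbf{x}_{k_l})\otimes O_{k_r}(\mathbf{x}_{k_r}))D_{kj}^*J_j^*$, where $J_j$ is the $m\times n$ matrix whose $j$-th row is all ones and other entries zero. *)

(* Defs.v *)
(* Kronecker product: tensmx (real_closed.mxtens), whose
   index convention (i,j) |-> i * n + j is the standard Kronecker one. *)
From HB Require Import structures.
From mathcomp Require Import all_boot all_order all_algebra.
From mathcomp Require Import complex mxtens.
Set Implicit Arguments.
Unset Strict Implicit.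
Unset Printing Implicit Defensive.
Import Order.TTheory GRing.Theory Num.Theory.
Local Open Scope ring_scope.

(* Architecture: a partition circuit (rooted binary tree whose leaves
   carry variables) together with the size (dimension) of every unit.
   Leaf v nv d : leaf carrying variable x_v, whose value set Omega(X_v)
                 is 'I_nv (nv values), output size d.     *)
Inductive ptree : Type :=
| Leaf (v : nat) (nv : nat) (d : nat)
| Node (d : nat) (l r : ptree).

Definition dim (t : ptree) : nat :=
  match t with Leaf _ _ d => d | Node d _ _ => d end.

Fixpoint leaf_vars (t : ptree) : seq nat :=
  match t with Leaf v _ _ => [:: v] | Node _ l r => leaf_vars l ++ leaf_vars r end.

Definition partition_circuit (N : nat) (t : ptree) : Prop :=
  perm_eq (leaf_vars t) (iota 0 N).

Fixpoint asg (t : ptree) : Type :=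
  match t with Leaf _ nv _ => 'I_nv | Node _ l r => (asg l * asg r)%type end.

Section PC.
Variable R : rcfType.

(* parameters: leaf k: the vectors P_{x_k}; internal k: the matrix W_k *)
Fixpoint PCparams (t : ptree) : Type :=
  match t with
  | Leaf _ nv d => 'I_nv -> 'cV[R]_d
  | Node d l r => ('M[R]_(d, dim l * dim r) * PCparams l * PCparams r)%type
  end.

Fixpoint PC_valid (t : ptree) : PCparams t -> Prop :=
  match t return PCparams t -> Prop with
  | Leaf _ nv d => fun P =>
      (forall x i, 0 <= P x i 0) /\ \sum_(x < nv) P x = const_mx 1
  | Node d l r => fun p =>
      let: (W, pl, pr) := p in
      [/\ (forall i j, 0 <= W i j),
          (forall i, \sum_j W i j = 1),
          PC_valid pl & PC_valid pr]
  end.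

Fixpoint PC_eval (t : ptree) : PCparams t -> asg t -> 'cV[R]_(dim t) :=
  match t return PCparams t -> asg t -> 'cV[R]_(dim t) with
  | Leaf _ nv d => fun P x => P x
  | Node d l r => fun p x =>
      let: (W, pl, pr) := p in
      W *m (PC_eval pl x.1 *t PC_eval pr x.2)
  end.
End PC.

Section DPU.
Variable R : rcfType.
Local Notation C := R[i].

Definition adjmx m n (A : 'M[C]_(m, n)) : 'M[C]_(n, m) :=
  (map_mx (@conjc R) A)^T.

Definition Jmx m n (j : 'I_m) : 'M[C]_(m, n) :=
  \matrix_(a < m, b < n) (if a == j then 1 else 0).

Definition diagvec n (A : 'M[C]_n) : 'cV[C]_n := \col_i A i i.

(* parameters: leaf k: diagonal Delta_{x_k}; internal k: diagonal D_{kj} *)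
Fixpoint DPUparams (t : ptree) : Type :=
  match t with
  | Leaf _ nv d => 'I_nv -> 'M[C]_d
  | Node d l r => (('I_d -> 'M[C]_(dim l * dim r)) * DPUparams l * DPUparams r)%type
  end.

Fixpoint DPU_valid (t : ptree) : DPUparams t -> Prop :=
  match t return DPUparams t -> Prop with
  | Leaf _ nv d => fun Dl =>
      (forall x, is_diag_mx (Dl x)) /\
      \sum_(x < nv) Dl x *m adjmx (Dl x) = 1%:M
  | Node d l r => fun p =>
      let: (D, pl, pr) := p in
      [/\ (forall j, is_diag_mx (D j)),
          (forall j, \tr (D j *m adjmx (D j)) = 1),
          DPU_valid pl & DPU_valid pr]
  end.

Fixpoint DPU_eval (t : ptree) : DPUparams t -> asg t -> 'M[C]_(dim t) :=
  match t return DPUparams t -> asg t -> 'M[C]_(dim t) with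
  | Leaf _ nv d => fun Dl x => Dl x *m adjmx (Dl x)
  | Node d l r => fun p x =>
      let: (D, pl, pr) := p in
      \sum_(j < d)
        Jmx (dim l * dim r) j *m D j *m (DPU_eval pl x.1 *t DPU_eval pr x.2)
          *m adjmx (D j) *m adjmx (Jmx (dim l * dim r) j)
  end.
End DPU.

Definition cvC (R : rcfType) n (v : 'cV[R]_n) : 'cV[R[i]]_n :=
  map_mx (fun r : R => (r%:C)%C) v.

Fixpoint circuits_agree (R : rcfType) (t : ptree) :
    PCparams R t -> DPUparams R t -> Prop :=
  match t return PCparams R t -> DPUparams R t -> Prop with
  | Leaf _ nv d => fun P Dl =>
      forall x : asg (Leaf _ nv d),
        cvC (PC_eval (t := Leaf _ nv d) P x) = diagvec (DPU_eval (t := Leaf _ nv d) Dl x)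
  | Node d l r => fun p o =>
      (forall x : asg (Node d l r),
          cvC (PC_eval (t := Node d l r) p x) = diagvec (DPU_eval (t := Node d l r) o x))
      /\ circuits_agree p.1.2 o.1.2 /\ circuits_agree p.2 o.2
  end.

(* Main.v *)
Require Import Defs.
From HB Require Import structures.
From mathcomp Require Import all_boot all_order all_algebra.
From mathcomp Require Import complex mxtens.
Set Implicit Arguments.
Unset Strict Implicit.
Unset Printing Implicit Defensive.
Import Order.TTheory GRing.Theory Num.Theory.
Local Open Scope ring_scope.
Local Open Scope complex_scope.

Section Aux.
Variable R : rcfType.
Local Notation C := R[i].

Definition sqc (z : C) : R := complex.Re z ^+ 2 + complex.Im z ^+ 2.

Lemma conj_sq (z : C) : z * conjc z = (sqc z)%:C.
Proof.
case: z => a b; rewrite /sqc /=; apply/eqP; rewrite eq_complex /=; apply/andP; split; apply/eqP.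
  by rewrite !expr2 mulrN opprK.
by rewrite mulrN mulrC addrC subrr.
Qed.

Lemma sqc_ge0 (z : C) : 0 <= sqc z.
Proof. by rewrite /sqc addr_ge0 // sqr_ge0. Qed.

Lemma diag_of n (A : 'M[C]_n) : is_diag_mx A -> A = diag_mx (\row_i A i i).
Proof.
move/is_diag_mxP => H; apply/matrixP=> i j; rewrite !mxE.
by case: (eqVneq i j) => [->|ne]; rewrite ?mulr1n ?mulr0n // H.
Qed.

Lemma adj_diag n (d : 'rV[C]_n) : adjmx (diag_mx d) = diag_mx (map_mx (@conjc R) d).
Proof.
apply/matrixP=> i j; rewrite /adjmx !mxE.
by case: (eqVneq i j) => [->|ne]; rewrite ?mulr1n ?mulr0n ?conjc0.
Qed.

Definition dg n (v : 'cV[R]_n) : 'M[C]_n := diag_mx (cvC v)^T.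

Lemma dg_diagvec n (v : 'cV[R]_n) : diagvec (dg v) = cvC v.
Proof. by apply/matrixP=> i j; rewrite !mxE eqxx mulr1n (ord1 j). Qed.

Lemma tens_dg m n (u : 'cV[R]_m) (v : 'cV[R]_n) : dg u *t dg v = dg (u *t v).
Proof.
apply/matrixP=> i j; rewrite !mxE.
have -> : (i == j) = (mxtens_unindex i == mxtens_unindex j).
  by rewrite (can_eq (@mxtens_unindexK _ _)).
case: (mxtens_unindex i) => [i1 i2]; case: (mxtens_unindex j) => [j1 j2] /=.
rewrite xpair_eqE.
case: (i1 == j1); case: (i2 == j2); rewrite /= ?mulr1n ?mulr0n ?mul0r ?mulr0 //.
by rewrite rmorphM /= (ord1 (mxtens_unindex (0 : 'I_(1*1))).1) (ord1 (mxtens_unindex (0 : 'I_(1*1))).2).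
Qed.


Lemma conj_if (b : bool) : conjc (if b then 1 else 0 : C) = if b then 1 else 0.
Proof. by case: b; rewrite ?conjc1 ?conjc0. Qed.

Lemma node_lem d n (D : 'I_d -> 'M[C]_n) (W : 'M[R]_(d, n)) (v : 'cV[R]_n) :
  (forall j, is_diag_mx (D j)) ->
  (forall j a, D j a a * conjc (D j a a) = (W j a)%:C) ->
  \sum_(j < d) Jmx R n j *m D j *m dg v *m adjmx (D j) *m adjmx (Jmx R n j)
  = dg (W *m v).
Proof.
move=> hD hW; apply/matrixP=> i k; rewrite summxE.
have E : forall j, (Jmx R n j *m D j *m dg v *m adjmx (D j) *m adjmx (Jmx R n j)) i k
   = if (i == j) && (k == j) then \sum_b (W j b * v b 0)%:C else 0.
  move=> j; rewrite [D j]diag_of // adj_diag /dg !mul_mx_diag.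
  rewrite mxE.
  under eq_bigr => b _ do rewrite !mxE.
  under eq_bigr => b _ do rewrite conj_if.
  case: (i == j); case: (k == j);
    try by rewrite big1 // => b _; rewrite ?mulr0 ?mul0r.
  by apply: eq_bigr => b _; rewrite mulr1 mul1r mulrAC hW rmorphM.
under eq_bigr => j _ do rewrite E.
rewrite -big_mkcond /= !mxE.
case: (eqVneq i k) => [<-|ne].
  rewrite (@big_pred1 _ _ _ _ i) ?mulr1n; last by move=> j; rewrite andbb eq_sym.
  by rewrite rmorph_sum.
rewrite big_pred0 ?mulr0n // => j.
by apply/negP => /andP [/eqP Hi /eqP Hk]; move: ne; rewrite Hi Hk eqxx.
Qed.

Lemma Ceq_inj (a b : R) : a%:C = b%:C :> C -> a = b.
Proof. by case. Qed.

Lemma dir1 t (o : DPUparams R t) : DPU_valid o ->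
  exists p : PCparams R t, PC_valid p /\ circuits_agree p o /\
    forall x, DPU_eval o x = dg (PC_eval p x).
Proof.
elim: t o => [v nv d | d l IHl r IHr] /=.
  move=> Dl [hD hS].
  have Ev : forall x, Dl x *m adjmx (Dl x) = dg (\col_i sqc (Dl x i i)).
    move=> x; rewrite [Dl x]diag_of // adj_diag mulmx_diag /dg.
    by congr diag_mx; apply/matrixP => i j; rewrite !mxE eqxx mulr1n conj_sq.
  exists (fun x => \col_i sqc (Dl x i i)); split; [split|split].
  - by move=> x i; rewrite mxE sqc_ge0.
  - apply/matrixP => i j; rewrite summxE !mxE; apply: Ceq_inj.
    rewrite rmorph_sum /=.
    move/matrixP: hS => /(_ i i); rewrite summxE !mxE eqxx /= => H.
    apply: (etrans _ (etrans H _)); last by [].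
    by apply: eq_bigr => x _; rewrite Ev !mxE eqxx mulr1n.
  - by move=> x; rewrite Ev dg_diagvec.
  - exact: Ev.
case=> [[D ol] or] [hD htr vl vr].
have [pl [vpl [apl epl]]] := IHl ol vl.
have [pr [vpr [apr epr]]] := IHr or vr.
pose W := \matrix_(j, a) sqc (D j a a).
have hW : forall j a, D j a a * conjc (D j a a) = (W j a)%:C.
  by move=> j a; rewrite mxE conj_sq.
have Ev : forall x : (asg l * asg r)%type, \sum_(j < d) Jmx R (Defs.dim l * Defs.dim r) j *m D j *m
     (DPU_eval ol x.1 *t DPU_eval or x.2) *m adjmx (D j) *m
     adjmx (Jmx R (Defs.dim l * Defs.dim r) j)
   = dg (W *m (PC_eval pl x.1 *t PC_eval pr x.2)).
  by move=> x; rewrite epl epr tens_dg (node_lem _ hD hW).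
exists (W, pl, pr); split; [split|split].
- by move=> i j; rewrite mxE sqc_ge0.
- move=> j; apply: Ceq_inj; rewrite rmorph_sum /=.
  apply: (etrans _ (etrans (htr j) _)); last by [].
  rewrite [D j]diag_of // adj_diag mulmx_diag mxtrace_diag.
  by apply: eq_bigr => a _; rewrite !mxE conj_sq.
- exact: vpl.
- exact: vpr.
- by split => //= x; rewrite Ev dg_diagvec.
- exact: Ev.
Qed.


Lemma sq_sqrt (a : R) : 0 <= a ->
  (Num.sqrt a)%:C * conjc ((Num.sqrt a)%:C) = a%:C.
Proof. by move=> ha; rewrite conjc_real -rmorphM -expr2 sqr_sqrtr. Qed.

Lemma dir2 t (p : PCparams R t) : PC_valid p ->
  exists o : DPUparams R t, DPU_valid o /\ circuits_agree p o /\
    forall x, DPU_eval o x = dg (PC_eval p x).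
Proof.
elim: t p => [v nv d | d l IHl r IHr] /=.
  move=> P [hP hS].
  pose Dl := fun x => diag_mx (\row_i (Num.sqrt (P x i 0))%:C) : 'M[C]_d.
  have Ev : forall x, Dl x *m adjmx (Dl x) = dg (P x).
    move=> x; rewrite adj_diag mulmx_diag /dg.
    by congr diag_mx; apply/matrixP => i j; rewrite !mxE (ord1 i) (sq_sqrt (hP _ _)).
  exists Dl; split; [split|split].
  - by move=> x; apply: diag_mx_is_diag.
  - rewrite (eq_bigr _ (fun x _ => Ev x)); apply/matrixP => i j.
    rewrite summxE !mxE.
    under eq_bigr do rewrite !mxE.
    rewrite sumrMnl -rmorph_sum.
    have := congr1 (fun M : 'cV_d => M i 0) hS; rewrite summxE mxE => ->.
    by rewrite rmorph1.
  - by move=> x; rewrite Ev dg_diagvec.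
  - exact: Ev.
case=> [[W pl] pr] [hW hs vl vr].
have [ol [vol [aol eol]]] := IHl pl vl.
have [or [vor [aor eor]]] := IHr pr vr.
pose D := fun j => diag_mx (\row_a (Num.sqrt (W j a))%:C)
   : 'M[C]_(Defs.dim l * Defs.dim r).
have hDW : forall j a, D j a a * conjc (D j a a) = (W j a)%:C.
  by move=> j a; rewrite !mxE eqxx mulr1n (sq_sqrt (hW _ _)).
have hD : forall j, is_diag_mx (D j) by move=> j; apply: diag_mx_is_diag.
have Ev : forall x : (asg l * asg r)%type, \sum_(j < d) Jmx R (Defs.dim l * Defs.dim r) j *m D j *m
     (DPU_eval ol x.1 *t DPU_eval or x.2) *m adjmx (D j) *m
     adjmx (Jmx R (Defs.dim l * Defs.dim r) j)
   = dg (W *m (PC_eval pl x.1 *t PC_eval pr x.2)).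
  by move=> x; rewrite eol eor tens_dg (node_lem _ hD hDW).
exists (D, ol, or); split; [split|split].
- exact: hD.
- move=> j; rewrite adj_diag mulmx_diag mxtrace_diag.
  under eq_bigr do rewrite !mxE (sq_sqrt (hW _ _)).
  by rewrite -rmorph_sum hs rmorph1.
- exact: vol.
- exact: vor.
- by split => //= x; rewrite Ev dg_diagvec.
- exact: Ev.
Qed.

End Aux.

Theorem proposition10 (R : rcfType) (N : nat) (t : ptree)
    (ht : partition_circuit N t) :
  (forall o : DPUparams R t, DPU_valid o ->
     exists p : PCparams R t, PC_valid p /\ circuits_agree p o) /\
  (forall p : PCparams R t, PC_valid p ->
     exists o : DPUparams R t, DPU_valid o /\ circuits_agree p o).
Proof.
split.
  by move=> o vo; have [p [vp [ap _]]] := dir1 vo; exists p.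
by move=> p vp; have [o [vo [ao _]]] := dir2 vp; exists o.
Qed.
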